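(* Let $\lambda\neq0$. For every integer $k\ge0$ and every positive integer $N$, $$\frac12\sum_{n=0}^{k+N}E_n\lambda^n S_1(k+N,n)=(-1)^N\lambda\sum_{i=1}^{N+1}a_{i-1}(N;\lambda)\sum_{l=0}^{k}\binom{k}{l}(-1)^l(N+l-1)_l\sum_{n=0}^{k-l}2^{-i}E_n^{(i)}\lambda^nS_1(k-l,n).$$
   Context: $(x)_n=x(x-1)\cdots(x-n+1)$, $(x)_0=1$. The Euler numbers $E_n$ and higher-order Euler numbers $E_n^{(r)}$ are defined by $\frac{2}{e^t+1}=\sum_{n\ge0}E_n\frac{t^n}{n!}$ and $\left(\frac{2}{e^t+1}\right)^r=\sum_{n\ge0}E_n^{(r)}\frac{t^n}{n!}$. $S_1(n,k)$ are the (signed) Stirling numbers of the first kind, given by $\frac{(\log(1+t))^k}{k!}=\sum_{n\ge k}S_1(n,k)\frac{t^n}{n!}$. The numbers $a_i(N;\lambda)$ are defined recursively by $a_0(0;\lambda)=1/\lambda$ and, for $N\ge0$: $a_0(N+1;\lambda)=(N+\lambda)a_0(N;\lambda)$, $a_{N+1}(N+1;\lambda)=-(N+1)\lambda a_N(N;\lambda)$, $a_k(N+1;\lambda)=-k\lambda a_{k-1}(N;\lambda)+(N+(k+1)\lambda)a_k(N;\lambda)$ for $1\le k\le N$; they are the coefficients for which $\left(\frac{d}{dt}\right)^N F=\frac{(-1)^N\lambda}{(1+t)^N}\sum_{i=1}^{N+1}a_{i-1}(N;\lambda)F^i$ with $F=\frac{1}{(1+t)^\lambda+1}$. *)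

(* Defs.v *)
From HB Require Import structures.
From mathcomp Require Import all_boot all_order all_algebra.
Set Implicit Arguments. Unset Strict Implicit. Unset Printing Implicit Defensive.
Import Order.TTheory GRing.Theory Num.Theory.
Local Open Scope ring_scope.

(* All power-series definitions below are the coefficientwise unfolding of the
   generating functions of the paper, computed in rat (ordinary coefficients,
   i.e. the coefficient of t^n, not t^n/n!). *)

(* Ordinary coefficients f_n of F(t) = 2/(e^t+1), determined by
   (e^t + 1) F(t) = 2, i.e.  sum_{j<=n} f_j/(n-j)! + f_n = 2 [n=0]. *)
Fixpoint euler_ocoef_seq (n : nat) : seq rat :=
  match n with
  | 0 => [:: 1]
  | n'.+1 =>
      let s := euler_ocoef_seq n' in
      rcons s ((- \sum_(j < n'.+1) s`_j / ((n'.+1 - j)`!)%:R) / 2%:R)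
  end.

Definition euler_ocoef (n : nat) : rat := (euler_ocoef_seq n)`_n.

Definition Euler (n : nat) : rat := (n`!)%:R * euler_ocoef n.

(* Ordinary coefficients of (2/(e^t+1))^r (Cauchy product). *)
Fixpoint eulerh_ocoef (r n : nat) : rat :=
  match r with
  | 0 => (n == 0)%:R
  | r'.+1 => \sum_(j < n.+1) euler_ocoef j * eulerh_ocoef r' (n - j)
  end.

Definition EulerH (r n : nat) : rat := (n`!)%:R * eulerh_ocoef r n.

Definition log1p_coef (m : nat) : rat :=
  if m is m'.+1 then (-1) ^+ m' / (m'.+1)%:R else 0.

Fixpoint powlog_coef (k n : nat) : rat :=
  match k with
  | 0 => (n == 0)%:R
  | k'.+1 => \sum_(m < n.+1) log1p_coef m * powlog_coef k' (n - m)
  end.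

(* Signed Stirling numbers of the first kind:
   (log(1+t))^k / k! = sum_n S1(n,k) t^n/n!. *)
Definition Stirling1 (n k : nat) : rat := (n`!)%:R / (k`!)%:R * powlog_coef k n.

(* The numbers a_k(N; lambda), given by the recursion of the paper;
   a_k(N; lambda) = 0 outside 0 <= k <= N. *)
Fixpoint acoef {R : fieldType} (lam : R) (N k : nat) : R :=
  match N with
  | 0 => if k == 0%N then lam^-1 else 0
  | N'.+1 =>
      if k == 0%N then (N'%:R + lam) * acoef lam N' 0
      else if k == N'.+1 then - (N'.+1)%:R * lam * acoef lam N' N'
      else if (k <= N')%N then
        - k%:R * lam * acoef lam N' k.-1 + (N'%:R + (k.+1)%:R * lam) * acoef lam N' k
      else 0
  end.

(* Main.v *)
Require Import Defs.
From HB Require Import structures.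
From mathcomp Require Import all_boot all_order all_algebra.
From mathcomp Require Import zify ring.
Import Order.TTheory GRing.Theory Num.Theory.
Local Open Scope ring_scope.

Definition eqm {R : numFieldType} (n : nat) (p q : {poly R}) :=
  exists r : {poly R}, p - q = 'X^n * r.

Lemma eqmP {R : numFieldType} n (p q : {poly R}) :
  eqm n p q <-> (forall i, (i < n)%N -> p`_i = q`_i).
Proof.
split.
  move=> [r hr] i hi; apply/eqP; rewrite -subr_eq0 -coefB hr coefXnM hi //.
move=> h; exists (drop_poly n (p - q)).
have ht : take_poly n (p - q) = 0.
  apply/polyP=> i; rewrite coef_take_poly coef0 coefB.
  by case: ifP => // hi; rewrite h // subrr.
by rewrite -{1}(poly_take_drop n (p - q)) ht add0r mulrC.
Qed.

Lemma eqm_refl {R : numFieldType} n (p : {poly R}) : eqm n p p.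
Proof. by exists 0; rewrite subrr mulr0. Qed.

Lemma eqm_eq {R : numFieldType} n (p q : {poly R}) : p = q -> eqm n p q.
Proof. by move=> ->; apply: eqm_refl. Qed.

Lemma eqm_sym {R : numFieldType} n (p q : {poly R}) : eqm n p q -> eqm n q p.
Proof. by move=> [r hr]; exists (- r); rewrite mulrN -hr opprB. Qed.

Lemma eqm_trans {R : numFieldType} n (p q s : {poly R}) :
  eqm n p q -> eqm n q s -> eqm n p s.
Proof.
move=> [r1 h1] [r2 h2]; exists (r1 + r2).
by rewrite mulrDr -h1 -h2 addrA subrK.
Qed.

Lemma eqm_add {R : numFieldType} n (p q p' q' : {poly R}) :
  eqm n p q -> eqm n p' q' -> eqm n (p + p') (q + q').
Proof.
move=> [r1 h1] [r2 h2]; exists (r1 + r2).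
rewrite mulrDr -h1 -h2; ring.
Qed.

Lemma eqm_opp {R : numFieldType} n (p q : {poly R}) :
  eqm n p q -> eqm n (- p) (- q).
Proof. by move=> [r h]; exists (- r); rewrite mulrN -h; ring. Qed.

Lemma eqm_sub {R : numFieldType} n (p q p' q' : {poly R}) :
  eqm n p q -> eqm n p' q' -> eqm n (p - p') (q - q').
Proof. by move=> h1 h2; apply: eqm_add => //; apply: eqm_opp. Qed.

Lemma eqm_mul {R : numFieldType} n (p q p' q' : {poly R}) :
  eqm n p q -> eqm n p' q' -> eqm n (p * p') (q * q').
Proof.
move=> [r1 h1] [r2 h2]; exists (r1 * p' + q * r2).
have -> : p * p' - q * q' = (p - q) * p' + q * (p' - q') by ring.
rewrite h1 h2; ring.
Qed.

Lemma eqm_mull {R : numFieldType} n (c p q : {poly R}) :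
  eqm n p q -> eqm n (c * p) (c * q).
Proof. by move=> h; apply: eqm_mul => //; apply: eqm_refl. Qed.

Lemma eqm_scale {R : numFieldType} n (c : R) (p q : {poly R}) :
  eqm n p q -> eqm n (c *: p) (c *: q).
Proof. by move=> h; rewrite -!mul_polyC; apply: eqm_mull. Qed.

Lemma eqm_exp {R : numFieldType} n (p q : {poly R}) k :
  eqm n p q -> eqm n (p ^+ k) (q ^+ k).
Proof.
move=> h; elim: k => [|k ih]; first by rewrite !expr0; apply: eqm_refl.
by rewrite !exprS; apply: eqm_mul.
Qed.

Lemma eqm_le {R : numFieldType} m n (p q : {poly R}) :
  (m <= n)%N -> eqm n p q -> eqm m p q.
Proof.
move=> hmn /eqmP h; apply/eqmP => i hi; apply: h; exact: leq_trans hi hmn.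
Qed.

Lemma eqm_deriv {R : numFieldType} n (p q : {poly R}) :
  eqm n p q -> eqm n.-1 p^`() q^`().
Proof.
move=> /eqmP h; apply/eqmP => i hi; rewrite !coef_deriv h //.
by case: n h hi.
Qed.

Lemma comp_polyXn {R : numFieldType} (p q : {poly R}) k :
  (p ^+ k) \Po q = (p \Po q) ^+ k.
Proof.
elim: k => [|k ih]; first by rewrite !expr0 comp_polyC.
by rewrite !exprS comp_polyM ih.
Qed.

Lemma eqm_comp {R : numFieldType} n (p q s : {poly R}) :
  s`_0 = 0 -> eqm n p q -> eqm n (p \Po s) (q \Po s).
Proof.
move=> h0 [r hr].
have [s' hs'] : eqm 1 s 0.
  by apply/eqmP => i; rewrite ltnS leqn0 => /eqP ->; rewrite h0 coef0.
have hs : s = 'X * s' by have := hs'; rewrite subr0 expr1.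
exists (s' ^+ n * (r \Po s)).
rewrite -comp_polyB hr comp_polyM comp_Xn_poly.
have -> : s ^+ n = 'X^n * s' ^+ n by rewrite {1}hs exprMn.
ring.
Qed.

Lemma eqm_cancel {R : numFieldType} n (c p q : {poly R}) :
  c`_0 != 0 -> eqm n (p * c) (q * c) -> eqm n p q.
Proof.
move=> hc /eqmP h; apply/eqmP.
set D := p - q.
suff hD : forall i, (i < n)%N -> D`_i = 0.
  by move=> i hi; apply/eqP; rewrite -subr_eq0 -coefB hD.
have hDc : forall i, (i < n)%N -> (D * c)`_i = 0.
  by move=> i hi; rewrite mulrBl coefB h // subrr.
elim/ltn_ind => i ih hi.
have := hDc i hi; rewrite mulrC coefM big_ord_recl subn0 /=.
rewrite big1 ?addr0.
  by move/eqP; rewrite mulf_eq0 (negbTE hc) /= => /eqP.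
move=> j _; have hj := ltn_ord j.
rewrite ih ?mulr0 //= /bump /=; lia.
Qed.

Arguments eqm_refl {R n p}.
Arguments eqm_eq {R n p q}.
Arguments eqm_sym {R n p q}.
Arguments eqm_trans {R n p q s}.
Arguments eqm_add {R n p q p' q'}.
Arguments eqm_opp {R n p q}.
Arguments eqm_sub {R n p q p' q'}.
Arguments eqm_mul {R n p q p' q'}.
Arguments eqm_mull {R n c p q}.
Arguments eqm_scale {R n c p q}.
Arguments eqm_exp {R n p q k}.
Arguments eqm_le {R m n p q}.
Arguments eqm_deriv {R n p q}.
Arguments eqm_comp {R n p q s}.
Arguments eqm_cancel {R n c p q}.

Lemma eseq_size n : size (euler_ocoef_seq n) = n.+1.
Proof. by elim: n => //= n ih; rewrite size_rcons ih. Qed.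

Lemma eseq_nth n j : (j <= n)%N -> (euler_ocoef_seq n)`_j = euler_ocoef j.
Proof.
elim: n j => [|n ih] j hj; first by case: j hj.
rewrite /= nth_rcons eseq_size.
case: ltnP => hjn; first by rewrite ih.
have -> : j = n.+1 by apply/eqP; rewrite eqn_leq hj hjn.
by rewrite eqxx /euler_ocoef /= nth_rcons eseq_size ltnn eqxx.
Qed.

Lemma e_rec n : euler_ocoef n.+1 =
  (- \sum_(j < n.+1) euler_ocoef j / ((n.+1 - j)`!)%:R) / 2%:R.
Proof.
rewrite {1}/euler_ocoef /= nth_rcons eseq_size ltnn eqxx.
congr (- _ / _); apply: eq_bigr => j _; by rewrite eseq_nth // -ltnS (ltn_ord j).
Qed.

Lemma e0 : euler_ocoef 0 = 1.
Proof. by []. Qed.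

Lemma e_id n : (0 < n)%N ->
  \sum_(j < n.+1) euler_ocoef j / ((n - j)`!)%:R + euler_ocoef n = 0.
Proof.
case: n => // m _; rewrite big_ord_recr /= subnn fact0 divr1.
have -> : \sum_(i < m.+1) euler_ocoef (widen_ord (leqnSn m.+1) i) /
      ((m.+1 - widen_ord (leqnSn m.+1) i)`!)%:R =
    \sum_(j < m.+1) euler_ocoef j / ((m.+1 - j)`!)%:R by [].
rewrite e_rec; set S := (\sum_(_ < _) _).
by field.
Qed.

Definition Ee {R : numFieldType} (T : nat) : {poly R} :=
  \poly_(j < T) ratr (euler_ocoef j).
Definition Xe {R : numFieldType} (T : nat) : {poly R} :=
  \poly_(j < T) ((j`!)%:R)^-1.

Lemma fact_neq0 {R : numFieldType} n : (n`!)%:R != 0 :> R.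
Proof. by rewrite pnatr_eq0 -lt0n fact_gt0. Qed.

Lemma Ee_rel {R : numFieldType} T :
  eqm T (Ee T * (Xe T + 1)) (2%:P : {poly R}).
Proof.
apply/eqmP => i hi; rewrite mulrDr mulr1 coefD coefM coefC !coef_poly hi.
have -> : \sum_(j < i.+1) (\poly_(j0 < T) ratr (euler_ocoef j0) : {poly R})`_j *
    (\poly_(j0 < T) ((j0`!)%:R)^-1 : {poly R})`_(i - j)
  = ratr (\sum_(j < i.+1) euler_ocoef j / ((i - j)`!)%:R).
  rewrite rmorph_sum; apply: eq_bigr => j _; rewrite !coef_poly.
  have hj : (j < T)%N by apply: leq_ltn_trans hi; rewrite -ltnS.
  have hij : (i - j < T)%N by apply: leq_ltn_trans hi; apply: leq_subr.
  by rewrite hj hij rmorphM fmorphV rmorph_nat.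
case: i hi => [|i] hi /=.
  by rewrite big_ord1 e0 /= fact0 divr1 rmorph1.
by rewrite -rmorphD (e_id i.+1) // rmorph0.
Qed.

Lemma Xe_der {R : numFieldType} T : eqm T.-1 (Xe T)^`() (Xe T : {poly R}).
Proof.
apply/eqmP => i hi; rewrite coef_deriv !coef_poly.
have h1 : (i.+1 < T)%N by case: T hi => //.
have h2 : (i < T)%N by apply: ltn_trans h1.
rewrite h1 h2 factS natrM.
have := fact_neq0 (R:=R) i; have : (i.+1)%:R != 0 :> R by rewrite pnatr_eq0.
move=> ha hb; by rewrite invfM mulrC -mulrnAr -(mulr_natr (i.+1%:R)^-1) mulVf // mulr1.
Qed.

Lemma Ee_der {R : numFieldType} T :
  eqm T.-1 (Ee T)^`() (2^-1 *: (Ee T)^+2 - Ee T : {poly R}).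
Proof.
set E := (Ee T : {poly R}); set X := (Xe T : {poly R}).
have h1 := Ee_rel (R:=R) T; rewrite -/E -/X in h1.
have h2 : eqm T.-1 (E^`() * (X + 1) + E * X^`()) 0.
  have := eqm_deriv h1; rewrite derivC derivM derivD derivC addr0 //.
have h3 : eqm T.-1 (E^`() * (X + 1)) (- (E * X)).
  have e : E^`() * (X + 1) = (E^`() * (X + 1) + E * X^`()) - E * X^`() by ring.
  rewrite e -[- (E * X)]add0r; apply: eqm_sub => //.
  by apply: eqm_mull; apply: Xe_der.
have h4 : eqm T.-1 ((2^-1 *: E^+2 - E) * (X + 1)) (- (E * X)).
  have e : (2^-1 *: E^+2 - E) * (X + 1) = (2^-1 *: E) * (E * (X + 1)) - E * (X + 1).
    by rewrite -!mul_polyC; ring.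
  rewrite e; apply: eqm_trans (_ : eqm _ ((2^-1 *: E) * 2%:P - E * (X + 1)) _).
    apply: eqm_le (leq_pred T) _; apply: eqm_sub; last by apply: eqm_refl.
    by apply: eqm_mull.
  apply: eqm_eq.
  have -> : 2^-1 *: E * 2%:P = E.
    by rewrite -mul_polyC mulrAC -polyCM mulVf ?pnatr_eq0 // polyC1 mul1r.
  ring.
apply: (eqm_cancel (c := X + 1)).
  rewrite coefD coef1 coef_poly; case: T {h1 h2 h3 h4 X E} => [|T] /=.
    by rewrite add0r oner_neq0.
  by rewrite fact0 invr1 (_ : 1 + 1 = 2%:R) // pnatr_eq0.
exact: eqm_trans h3 (eqm_sym h4).
Qed.

Definition Lg {R : numFieldType} (T : nat) : {poly R} :=
  \poly_(m < T) ratr (log1p_coef m).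

Lemma Lg0 {R : numFieldType} T : (Lg T : {poly R})`_0 = 0.
Proof. by rewrite coef_poly; case: T => //= T; rewrite rmorph0. Qed.

Lemma Lg_pow {R : numFieldType} T k m : (m < T)%N ->
  ((Lg T : {poly R}) ^+ k)`_m = ratr (powlog_coef k m).
Proof.
elim: k m => [|k ih] m hm; first by rewrite expr0 coef1 /= rmorph_nat.
rewrite exprS coefM /= rmorph_sum; apply: eq_bigr => j _.
have hj : (j < T)%N by apply: leq_ltn_trans hm; rewrite -ltnS.
have hij : (m - j < T)%N by apply: leq_ltn_trans hm; apply: leq_subr.
by rewrite coef_poly hj ih // rmorphM.
Qed.

Lemma Ee_pow {R : numFieldType} T r n : (n < T)%N ->
  ((Ee T : {poly R}) ^+ r)`_n = ratr (eulerh_ocoef r n).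
Proof.
elim: r n => [|r ih] n hn; first by rewrite expr0 coef1 /= rmorph_nat.
rewrite exprS coefM /= rmorph_sum; apply: eq_bigr => j _.
have hj : (j < T)%N by apply: leq_ltn_trans hn; rewrite -ltnS.
have hij : (n - j < T)%N by apply: leq_ltn_trans hn; apply: leq_subr.
by rewrite coef_poly hj ih // rmorphM.
Qed.

Lemma pow_val {R : numFieldType} (p : {poly R}) n m : p`_0 = 0 -> (m < n)%N ->
  (p ^+ n)`_m = 0.
Proof.
move=> h0; elim: n m => [|n ih] m // hm.
rewrite exprS coefM big1 // => j _.
case: (nat_of_ord j) (ltn_ord j) => [|j'] hj; first by rewrite h0 mul0r.
by rewrite ih ?mulr0 //; lia.
Qed.

Lemma sum_ext {R : numFieldType} (f : nat -> R) a b : (a <= b)%N ->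
  (forall i, (a <= i)%N -> (i < b)%N -> f i = 0) ->
  \sum_(i < a) f i = \sum_(i < b) f i.
Proof.
move=> hab h; rewrite -!(big_mkord xpredT) (big_cat_nat (leq0n a) hab) /=.
rewrite [X in _ = _ + X]big1_seq ?addr0 // => i /andP [_].
by rewrite mem_index_iota => /andP [h1 h2]; apply: h.
Qed.

Lemma coef_comp_cut {R : numFieldType} (p q : {poly R}) m : q`_0 = 0 ->
  (p \Po q)`_m = \sum_(n < m.+1) p`_n * (q ^+ n)`_m.
Proof.
move=> h0; rewrite coef_comp_poly.
rewrite (@sum_ext _ (fun n => p`_n * (q ^+ n)`_m) _ _ (leq_maxl (size p) m.+1)).
  rewrite [RHS](@sum_ext _ (fun n => p`_n * (q ^+ n)`_m) _ _ (leq_maxr (size p) m.+1)) //.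
  by move=> i hi _; rewrite pow_val ?mulr0.
by move=> i hi _; rewrite nth_default ?mul0r.
Qed.

Lemma Euler_EH n : Euler n = EulerH 1 n.
Proof.
rewrite /Euler /EulerH; congr (_ * _).
rewrite /= big_ord_recr /= subnn /= mulr1 big1 ?add0r // => j _.
have hj := ltn_ord j; have -> : (n - j == 0)%N = false by apply/negbTE; rewrite /=; lia.
by rewrite mulr0.
Qed.

Definition Fp {R : numFieldType} (T : nat) (lam : R) : {poly R} :=
  2^-1 *: (Ee T \Po (lam *: Lg T)).

Lemma lamL0 {R : numFieldType} T (lam : R) : (lam *: (Lg T : {poly R}))`_0 = 0.
Proof. by rewrite coefZ Lg0 mulr0. Qed.

Lemma F_pow_coef {R : numFieldType} T (lam : R) i m : (m < T)%N ->
  (m`!)%:R * ((Fp T lam) ^+ i)`_m =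
  \sum_(n < m.+1) (2^-1) ^+ i * ratr (EulerH i n) * lam ^+ n
                   * ratr (Stirling1 m n).
Proof.
move=> hm; rewrite /Fp exprZn -comp_polyXn coefZ coef_comp_cut ?lamL0 //.
rewrite !mulr_sumr; apply: eq_bigr => n _.
have hn : (n < T)%N by apply: leq_ltn_trans hm; rewrite -ltnS.
rewrite exprZn coefZ Ee_pow // Lg_pow //.
rewrite /EulerH /Stirling1 !rmorphM fmorphV !rmorph_nat.
have := fact_neq0 (R:=R) n; have := fact_neq0 (R:=R) m => h1 h2.
field; done.
Qed.

Lemma divn_mul {R : numFieldType} (a : R) n : (0 < n)%N -> a / n%:R *+ n = a.
Proof.
by move=> hn; rewrite -(mulr_natr (a / n%:R)) divfK // pnatr_eq0 -lt0n.
Qed.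

Lemma Lg_der {R : numFieldType} T :
  eqm T.-1 ((1 + 'X) * (Lg T)^`()) (1 : {poly R}).
Proof.
apply/eqmP => i hi; rewrite mulrDl mul1r coefD coefXM !coef_deriv !coef_poly coef1.
case: i hi => [|i] hi /=.
  have -> : (1 < T)%N by case: T hi.
  by rewrite addr0 /log1p_coef expr0 divr1 rmorph1.
have -> : (i.+2 < T)%N by case: T hi.
have -> : (i.+1 < T)%N by case: T hi => //= T hi; lia.
rewrite /log1p_coef !rmorphM !fmorphV !rmorphXn rmorphN rmorph1 !rmorph_nat.
rewrite !divn_mul // exprS mulN1r addNr //.
Qed.

Lemma F_der {R : numFieldType} T (lam : R) :
  eqm T.-1 ((1 + 'X) * (Fp T lam)^`()) (lam *: ((Fp T lam)^+2 - Fp T lam)).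
Proof.
set C := Ee T \Po (lam *: Lg T).
have hF : Fp T lam = 2^-1 *: C by [].
rewrite hF derivZ deriv_comp derivZ.
have e : (1 + 'X) * (2^-1 *: (((Ee T)^`() \Po (lam *: Lg T)) * (lam *: (Lg T)^`())))
   = (2^-1 * lam) *: (((Ee T)^`() \Po (lam *: Lg T)) * ((1 + 'X) * (Lg T)^`())).
  by rewrite -!mul_polyC polyCM; ring.
rewrite e.
apply: eqm_trans (_ : eqm _ ((2^-1 * lam) *: ((Ee T)^`() \Po (lam *: Lg T))) _).
  apply: eqm_scale; rewrite -[X in eqm _ _ X]mulr1; apply: eqm_mull; exact: Lg_der.
apply: eqm_trans (_ : eqm _ ((2^-1 * lam) *: ((2^-1 *: (Ee T)^+2 - Ee T) \Po (lam *: Lg T))) _).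
  by apply: eqm_scale; apply: eqm_comp; [exact: lamL0 | exact: Ee_der].
apply: eqm_eq; rewrite comp_polyB comp_polyZ comp_polyXn -/C.
by rewrite -!mul_polyC polyCM; ring.
Qed.

Lemma acoef_out {R : numFieldType} (lam : R) N j : (N < j)%N -> acoef lam N j = 0.
Proof.
case: N => [|N] h /=; first by case: j h.
have -> : (j == 0%N) = false by lia.
have -> : (j == N.+1) = false by lia.
by have -> : (j <= N)%N = false by lia.
Qed.

Lemma acoef_rec {R : numFieldType} (lam : R) N j :
  acoef lam N.+1 j = - j%:R * lam * acoef lam N j.-1
                     + (N%:R + j.+1%:R * lam) * acoef lam N j.
Proof.
case: j => [|j] /=; first by ring.
case: (ltngtP j N) => h.
- by have -> : (j.+1 == N.+1) = false by lia.
- have -> : (j.+1 == N.+1) = false by lia.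
  by rewrite !acoef_out ?mulr0 ?addr0 //; lia.
- by rewrite h eqxx (@acoef_out _ lam N N.+1 (ltnSn N)) mulr0 addr0.
Qed.

Fixpoint Ap {R : numFieldType} (lam : R) (N : nat) : {poly R} :=
  match N with
  | 0 => lam^-1 *: 'X
  | N'.+1 => N'%:R *: Ap lam N' + lam *: (('X - 'X^2) * (Ap lam N')^`())
  end.

Lemma Ap_coef {R : numFieldType} (lam : R) N :
  (Ap lam N)`_0 = 0 /\ forall j, (Ap lam N)`_j.+1 = acoef lam N j.
Proof.
elim: N => [|N [ih0 ih]].
  split; first by rewrite /= coefZ coefX mulr0.
  by move=> j; rewrite /= coefZ coefX; case: j => [|j] /=; rewrite ?mulr1 ?mulr0.
split.
  by rewrite /= coefD !coefZ mulrBl coefB coefXM coefXnM ih0 /= mulr0 subrr !mulr0 addr0.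
move=> j; rewrite acoef_rec /= coefD !coefZ mulrBl coefB coefXM coefXnM /= !coef_deriv ih.
case: j => [|j] /=.
  rewrite /= ?subr0; ring.
have -> : (j.+2 - 2 = j)%N by lia. rewrite ih; ring.
Qed.

Definition Sp {R : numFieldType} T (lam : R) N : {poly R} :=
  ((-1) ^+ N * lam) *: (Ap lam N \Po Fp T lam).
Definition Gp {R : numFieldType} T (lam : R) N : {poly R} :=
  (1 + 'X) ^+ N * (Fp T lam)^`(N).

Lemma G_rec {R : numFieldType} T (lam : R) N :
  Gp T lam N.+1 = (1 + 'X) * (Gp T lam N)^`() - N%:R *: Gp T lam N.
Proof.
rewrite /Gp derivM deriv_exp derivD derivC derivX add0r mul1r -derivnS scaler_nat.
case: N => [|N] /=; first by rewrite !mulr0n expr0 mul0r add0r subr0 mul1r expr1.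
rewrite !exprS; ring.
Qed.

Lemma S_rec {R : numFieldType} T (lam : R) N :
  eqm T.-1 ((1 + 'X) * (Sp T lam N)^`() - N%:R *: Sp T lam N) (Sp T lam N.+1).
Proof.
rewrite /Sp derivZ deriv_comp.
set F := Fp T lam; set A := Ap lam N; set c := (-1) ^+ N * lam.
apply: eqm_trans (_ : eqm _ (c *: ((A^`() \Po F) * (lam *: (F ^+ 2 - F)))
                              - N%:R *: (c *: (A \Po F))) _).
  apply: eqm_sub; last by apply: eqm_refl.
  have -> : (1 + 'X) * (c *: ((A^`() \Po F) * F^`())) =
            c *: ((A^`() \Po F) * ((1 + 'X) * F^`())).
    by rewrite -!mul_polyC; ring.
  by apply: eqm_scale; apply: eqm_mull; apply: F_der.
apply: eqm_eq; rewrite /= -/F -/A comp_polyD !comp_polyZ comp_polyM comp_polyB.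
rewrite comp_polyX comp_Xn_poly (exprS (-1)) mulN1r -mulNr -/c.
rewrite -!mul_polyC !polyCM polyCN; ring.
Qed.

Lemma GS {R : numFieldType} T (lam : R) N : lam != 0 ->
  eqm (T.-1 - N) (Gp T lam N) (Sp T lam N).
Proof.
move=> hl; elim: N => [|N ih].
  apply: eqm_eq; rewrite /Gp /Sp /= expr0 mul1r comp_polyZ comp_polyX.
  by rewrite expr0 mul1r scalerA mulfV // scale1r.
rewrite G_rec; apply: eqm_trans (_ : eqm _ ((1 + 'X) * (Sp T lam N)^`()
     - N%:R *: Sp T lam N) _).
  apply: eqm_sub; last by apply: eqm_scale; apply: eqm_le ih; lia.
  by apply: eqm_mull; rewrite subnS; apply: eqm_deriv.
by apply: eqm_le (S_rec T lam N); apply: leq_subr.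
Qed.

Definition Qp {R : numFieldType} T N : {poly R} :=
  \poly_(l < T) ((-1) ^+ l * ('C(N + l - 1, l))%:R).

Lemma Q0 {R : numFieldType} T : eqm T (Qp T 0) (1 : {poly R}).
Proof.
apply/eqmP => i hi; rewrite coef_poly hi coef1.
case: i hi => [|i] hi /=; first by rewrite mulr1.
by rewrite subn1 /= bin_small // mulr0.
Qed.

Lemma QS {R : numFieldType} T N :
  eqm T ((1 + 'X) * Qp T N.+1) (Qp T N : {poly R}).
Proof.
apply/eqmP => i hi; rewrite mulrDl mul1r coefD coefXM !coef_poly hi.
case: i hi => [|i] hi /=; first by rewrite !bin0 addr0.
have hi' : (i < T)%N by apply: ltn_trans hi.
rewrite hi'.
have -> : (N.+1 + i.+1 - 1 = (N + i).+1)%N by lia.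
have -> : (N.+1 + i - 1 = N + i)%N by lia.
have -> : (N + i.+1 - 1 = N + i)%N by lia.
rewrite binS natrD exprS mulN1r; ring.
Qed.

Lemma QP {R : numFieldType} T N :
  eqm T (Qp T N * (1 + 'X) ^+ N) (1 : {poly R}).
Proof.
elim: N => [|N ih]; first by rewrite expr0 mulr1; apply: Q0.
apply: eqm_trans ih.
have -> : Qp T N.+1 * (1 + 'X) ^+ N.+1 = ((1 + 'X) * Qp T N.+1) * (1 + 'X) ^+ N :> {poly R}.
  by rewrite exprS; ring.
by apply: eqm_mul; [apply: QS | apply: eqm_refl].
Qed.

Lemma sum_extV {V : zmodType} (f : nat -> V) a b : (a <= b)%N ->
  (forall i, (a <= i)%N -> (i < b)%N -> f i = 0) ->
  \sum_(i < a) f i = \sum_(i < b) f i.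
Proof.
move=> hab h; rewrite -!(big_mkord xpredT) (big_cat_nat (leq0n a) hab) /=.
rewrite [X in _ = _ + X]big1_seq ?addr0 // => i /andP [_].
by rewrite mem_index_iota => /andP [h1 h2]; apply: h.
Qed.

Lemma AF {R : numFieldType} (lam : R) N (F : {poly R}) :
  Ap lam N \Po F = \sum_(1 <= i < N.+2) acoef lam N (i - 1) *: F ^+ i.
Proof.
have [h0 hA] := Ap_coef lam N.
have hs : (size (Ap lam N) <= N.+2)%N.
  apply/leq_sizeP => j hj; case: j hj => [|j] // hj.
  by rewrite hA acoef_out.
rewrite comp_polyE (@sum_extV _ (fun i => (Ap lam N)`_i *: F ^+ i) _ _ hs).
  rewrite -(big_mkord xpredT (fun i => (Ap lam N)`_i *: F ^+ i)) big_ltn // h0 scale0r add0r.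
  apply: eq_big_nat => i /andP [hi _].
  by case: i hi => // i _; rewrite hA subn1.
by move=> i hi _; rewrite nth_default ?scale0r.
Qed.

Lemma S_coef {R : numFieldType} T (lam : R) N m :
  (Sp T lam N)`_m = (-1) ^+ N * lam *
     \sum_(1 <= i < N.+2) acoef lam N (i - 1) * ((Fp T lam) ^+ i)`_m.
Proof.
rewrite /Sp coefZ AF coef_sum; congr (_ * _); apply: eq_bigr => i _.
by rewrite coefZ.
Qed.

Theorem theorem4 (R : numFieldType) (lam : R) (hlam : lam != 0) (k N : nat)
    (hN : (0 < N)%N) :
  2^-1 * \sum_(0 <= n < (k + N).+1)
           ratr (Euler n) * lam ^+ n * ratr (Stirling1 (k + N) n)
  = (-1) ^+ N * lam *
    \sum_(1 <= i < N.+2) acoef lam N (i - 1) *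
      \sum_(0 <= l < k.+1) ('C(k, l))%:R * (-1) ^+ l * ((N + l - 1) ^_ l)%:R *
        \sum_(0 <= n < (k - l).+1)
           (2^-1) ^+ i * ratr (EulerH i n) * lam ^+ n * ratr (Stirling1 (k - l) n).
Proof.
pose T := (k + N).+2.
pose F := Fp T lam.
have hL : 2^-1 * \sum_(0 <= n < (k + N).+1)
           ratr (Euler n) * lam ^+ n * ratr (Stirling1 (k + N) n)
          = ((k + N)`!)%:R * F`_(k + N).
  have hT : (k + N < T)%N by rewrite /T; lia.
  have := F_pow_coef T lam 1 (k + N) hT; rewrite expr1 => ->.
  rewrite big_mkord mulr_sumr; apply: eq_bigr => n _.
  by rewrite Euler_EH expr1 !mulrA.
have hkey : (Qp T N * Sp T lam N)`_k = F`_(N + k) *+ (N + k) ^_ N.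
  rewrite -coef_derivn.
  suff h : eqm k.+1 (Qp T N * Sp T lam N) (F^`(N)) by apply: (proj1 (eqmP _ _ _) h).
  have h1 : eqm k.+1 (Gp T lam N) (Sp T lam N).
    by have := GS T lam N hlam; rewrite (_ : (T.-1 - N = k.+1)%N) // /T; lia.
  have h2 : eqm k.+1 (Qp T N * (1 + 'X) ^+ N) (1 : {poly R}).
    by apply: eqm_le (QP T N); rewrite /T; lia.
  apply: eqm_trans (_ : eqm _ (Qp T N * Gp T lam N) _).
    by apply: eqm_mull; apply: eqm_sym.
  rewrite /Gp mulrA -[X in eqm _ _ X]mul1r.
  by apply: eqm_mul => //; apply: eqm_refl.
have hR : forall i, \sum_(0 <= l < k.+1) ('C(k, l))%:R * (-1) ^+ l * ((N + l - 1) ^_ l)%:R *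
        \sum_(0 <= n < (k - l).+1)
           (2^-1) ^+ i * ratr (EulerH i n) * lam ^+ n * ratr (Stirling1 (k - l) n)
     = \sum_(l < k.+1) (k`!)%:R * (Qp T N)`_l * (F ^+ i)`_(k - l).
  move=> i; rewrite big_mkord; apply: eq_bigr => l _.
  have hl : (l <= k)%N by rewrite -ltnS (ltn_ord l).
  rewrite big_mkord -(F_pow_coef T); last by rewrite /T; lia.
  rewrite coef_poly (_ : (l < T)%N); last by rewrite /T; lia.
  have e : ('C(k, l) * (N + l - 1) ^_ l * (k - l)`! = k`! * 'C(N + l - 1, l))%N.
    rewrite -bin_ffact -(bin_fact hl); ring.
  transitivity ((('C(k, l) * (N + l - 1) ^_ l * (k - l)`!)%N)%:R *
                ((-1) ^+ l * (F ^+ i)`_(k - l)) : R).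
    by rewrite !natrM; ring.
  by rewrite e natrM; ring.
rewrite hL addnC.
under eq_bigr => i _ do rewrite hR.
have -> : ((N + k)`!)%:R * F`_(N + k) = (k`!)%:R * (Qp T N * Sp T lam N)`_k.
  have e : ((N + k) ^_ N * k`! = (N + k)`!)%N.
    by rewrite -{2}(addKn N k) ffact_fact // leq_addr.
  by rewrite hkey mulrnAr -mulrnAl -mulrnA mulnC e.
rewrite coefM.
rewrite (eq_bigr (fun j : 'I_k.+1 => (Qp T N)`_j * ((-1) ^+ N * lam * \sum_(1 <= i < N.+2) acoef lam N (i - 1) * (F ^+ i)`_(k - j)))); last by move=> j _; rewrite S_coef.
rewrite mulr_sumr [RHS]mulr_sumr.
under eq_bigr => l _ do rewrite !mulr_sumr.
under [RHS]eq_bigr => i _ do rewrite !mulr_sumr.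
rewrite exchange_big /=; apply: eq_bigr => i _; apply: eq_bigr => l _.
rewrite -/F; ring.
Qed.
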